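(* Assume, in the setting described in the context, the strengthened saturation assumption: there is a fixed $b_{0,\gamma}\in(0,1)$ and a number $b_{h,\gamma}<b_{0,\gamma}$ such that $$\gamma < b_{h,\gamma}\,|J(u)-J(\tilde u)|.$$ Then the practical error estimator $\eta_h^{(2)}$ satisfies $$\underline{c}_{h,\gamma}|\eta_h^{(2)}| \le |J(u)-J(\tilde u)| \le \overline{c}_{h,\gamma}|\eta_h^{(2)}| \quad\text{and}\quad \underline{c}_{\gamma}|\eta_h^{(2)}| \le |J(u)-J(\tilde u)| \le \overline{c}_{\gamma}|\eta_h^{(2)}|,$$ where $\underline{c}_{h,\gamma}:=1/(1+b_{h,\gamma})$, $\overline{c}_{h,\gamma}:=1/(1-b_{h,\gamma})$, $\underline{c}_{\gamma}:=1/(1+b_{0,\gamma})$ and $\overline{c}_{\gamma}:=1/(1-b_{0,\gamma})$.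
   Context: Let $U$ and $V$ be real Banach spaces with dual $V^*$. Let $\mathcal{A}:U\to V^*$ be a (nonlinear) operator that is three times continuously Fréchet differentiable, and let $J:U\to\mathbb{R}$ be three times continuously Fréchet differentiable. Notation: $\mathcal{A}(w)(v)$ is the value of $\mathcal{A}(w)\in V^*$ at $v\in V$. For fixed $v$, $\mathcal{A}'(w)(\varphi,v)$, $\mathcal{A}''(w)(\varphi,\psi,v)$ and $\mathcal{A}'''(w)(\varphi,\psi,\chi,v)$ denote the first, second and third Fréchet derivatives of $w\mapsto\mathcal{A}(w)(v)$ at $w$ in the directions $\varphi,\psi,\chi\in U$. Analogously, $J'(w)(\varphi)$ and $J'''(w)(\varphi,\psi,\chi)$ denote derivatives of $J$. Let $u\in U$ satisfy $\mathcal{A}(u)(v)=0$ for all $v\in V$, and let $z\in V$ satisfy $\mathcal{A}'(u)(\varphi,z)=J'(u)(\varphi)$ for all $\varphi\in U$. Let $U_h^{(2)}\subset U$ and $V_h^{(2)}\subset V$ be finite-dimensional subspaces. Let $u_h^{(2)}\in U_h^{(2)}$ satisfy $\mathcal{A}(u_h^{(2)})(v)=0$ for all $v\in V_h^{(2)}$. Let $z_h^{(2)}\in V_h^{(2)}$ satisfy $\mathcal{A}'(u_h^{(2)})(\varphi,z_h^{(2)})=J'(u_h^{(2)})(\varphi)$ for all $\varphi\in U_h^{(2)}$. Let $\tilde u\in U_h^{(2)}$ and $\tilde z\in V_h^{(2)}$ be arbitrary fixed elements. Define $\rho(\tilde u)(v):=-\mathcal{A}(\tilde u)(v)$ and $\rho^*(\tilde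 u,\tilde z)(\varphi):=J'(\tilde u)(\varphi)-\mathcal{A}'(\tilde u)(\varphi,\tilde z)$. With $e:=u-\tilde u$ and $e^*:=z-\tilde z$, define $$\mathcal{R}^{(3)}:=\frac12\int_0^1\Big[J'''(\tilde u+se)(e,e,e)-\mathcal{A}'''(\tilde u+se)(e,e,e,\tilde z+se^* )-3\mathcal{A}''(\tilde u+se)(e,e,e^* )\Big]s(s-1)\,ds.$$ Let $\mathcal{R}^{(3)(2)}$ be the same expression with $e,e^*,z$ replaced by $e^{(2)}:=u_h^{(2)}-\tilde u$, $e^{(2),*}:=z_h^{(2)}-\tilde z$, $z_h^{(2)}$. Define $\eta_h^{(2)}:=\tfrac12\rho(\tilde u)(z_h^{(2)}-\tilde z)+\tfrac12\rho^*(\tilde u,\tilde z)(u_h^{(2)}-\tilde u)$ and $$\gamma:=|J(u)-J(u_h^{(2)})|+|\mathcal{R}^{(3)}-\mathcal{R}^{(3)(2)}|+|\rho(\tilde u)(\tilde z)|+|\mathcal{R}^{(3)}|.$$ *)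

(* Defs.v *)
From HB Require Import structures.
From mathcomp Require Import all_boot all_order all_algebra.
From mathcomp Require Import all_classical all_reals all_analysis.
Set Implicit Arguments. Unset Strict Implicit. Unset Printing Implicit Defensive.
Import Order.TTheory GRing.Theory Num.Theory.
Import numFieldNormedType.Exports.
Local Open Scope classical_set_scope.
Local Open Scope ring_scope.

(* A map  F : U -> (X -> R)  is a map from U into a space of forms whose   *)
(* arguments are collected in the type X; [nX x] is the product of the     *)
(* norms of the arguments, so  sup_x |f x| / nX x  is the operator norm.   *)
(* The derivative of F is a map DF : U -> (U * X -> R), the new (first)    *)
(* argument being the direction of differentiation.                        *)
Section Forms.
Variables (R : realType) (U : normedModType R).

Definition n_unit (_ : unit) : R := 1.
Definition n_cons (X : Type) (nX : X -> R) (p : U * X) : R := `|p.1| * nX p.2.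

Definition bounded_linear_deriv (X : Type) (nX : X -> R)
    (DF : U * X -> R) : Prop :=
  (forall (a : R) (h k : U) (x : X), DF (a *: h + k, x) = a * DF (h, x) + DF (k, x))
  /\ exists C : R, forall (h : U) (x : X), `|DF (h, x)| <= C * (`|h| * nX x).

Definition is_frechet_deriv (X : Type) (nX : X -> R)
    (F : U -> X -> R) (DF : U -> U * X -> R) : Prop :=
  forall w : U,
    bounded_linear_deriv nX (DF w) /\
    forall eps : R, 0 < eps -> exists2 del : R, 0 < del &
      forall h : U, `|h| < del -> forall x : X,
        `|F (w + h) x - F w x - DF w (h, x)| <= eps * `|h| * nX x.

Definition op_continuous (X : Type) (nX : X -> R) (F : U -> X -> R) : Prop :=
  forall w : U, forall eps : R, 0 < eps -> exists2 del : R, 0 < del &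
    forall h : U, `|h| < del -> forall x : X,
      `|F (w + h) x - F w x| <= eps * nX x.

End Forms.

Notation args1 U X := (U * X)%type.
Notation args2 U X := (U * (U * X))%type.
Notation args3 U X := (U * (U * (U * X)))%type.

Section Setting.
Variables (R : realType) (U : normedModType R) (V : normedModType R).

Definition nV0 (v : V) : R := `|v|.
Definition nV1 := n_cons (U := U) nV0.
Definition nV2 := n_cons (U := U) nV1.
Definition nJ1 := n_cons (U := U) (n_unit R).
Definition nJ2 := n_cons (U := U) nJ1.

Definition C3_functional (J : U -> R) (J1 : U -> args1 U unit -> R)
    (J2 : U -> args2 U unit -> R) (J3 : U -> args3 U unit -> R) : Prop :=
  [/\ is_frechet_deriv (n_unit R) (fun w (_ : unit) => J w) J1,
      is_frechet_deriv nJ1 J1 J2,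
      is_frechet_deriv nJ2 J2 J3 &
      op_continuous (n_cons nJ2) J3].

(* A : U -> V^* (A w is a bounded linear functional on V) is three times
   continuously Fréchet differentiable, with derivatives A1 A2 A3;
   A k w (phi_1, .., (phi_k, v)) = A^(k)(w)(phi_1, .., phi_k, v). *)
Definition C3_operator (A : U -> V -> R) (A1 : U -> args1 U V -> R)
    (A2 : U -> args2 U V -> R) (A3 : U -> args3 U V -> R) : Prop :=
  [/\ forall w : U,
        (forall (a : R) (v v' : V), A w (a *: v + v') = a * A w v + A w v')
        /\ exists C : R, forall v : V, `|A w v| <= C * `|v|,
      is_frechet_deriv nV0 A A1,
      is_frechet_deriv nV1 A1 A2,
      is_frechet_deriv nV2 A2 A3 &
      op_continuous (n_cons nV2) A3].

Definition fin_dim_subspace (W : normedModType R) (S : set W) : Prop :=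
  [/\ S 0,
      (forall (a : R) (x y : W), S x -> S y -> S (a *: x + y)) &
      exists (n : nat) (b : 'I_n -> W),
        (forall i, S (b i)) /\
        forall x, S x -> exists c : 'I_n -> R, x = \sum_(i < n) c i *: b i].

Definition rho (A : U -> V -> R) (ut : U) (v : V) : R := - A ut v.
Definition rho_star (J1 : U -> args1 U unit -> R) (A1 : U -> args1 U V -> R)
    (ut : U) (zt : V) (phi : U) : R := J1 ut (phi, tt) - A1 ut (phi, zt).

Definition remainder3 (J3 : U -> args3 U unit -> R) (A2 : U -> args2 U V -> R)
    (A3 : U -> args3 U V -> R) (ut : U) (zt : V) (e : U) (e' : V) : R :=
  2^-1 * \int[@lebesgue_measure R]_(s in `[0%R, 1%R])
    ((J3 (ut + s *: e) (e, (e, (e, tt)))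
      - A3 (ut + s *: e) (e, (e, (e, zt + s *: e')))
      - 3 * A2 (ut + s *: e) (e, (e, e'))) * (s * (s - 1))).

End Setting.

(* Main.v *)
Require Import Defs.
From HB Require Import structures.
From mathcomp Require Import all_boot all_order all_algebra.
From mathcomp Require Import all_classical all_reals all_analysis.
From mathcomp Require Import ring lra.
Import Order.TTheory GRing.Theory Num.Theory.
Import numFieldNormedType.Exports.
Local Open Scope classical_set_scope.
Local Open Scope ring_scope.

Section Helpers.
Variables (R : realType) (U : normedModType R).

Lemma DF0 (X : Type) (nX : X -> R) (DF : U * X -> R) :
  bounded_linear_deriv nX DF -> forall x, DF (0, x) = 0.
Proof.
move=> [lin _] x; have := lin 1 0 0 x; rewrite scale1r addr0 mul1r.
by move=> /(congr1 (fun y => y - DF (0, x))); rewrite subrr addrK => ->.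
Qed.

Lemma DFZ (X : Type) (nX : X -> R) (DF : U * X -> R) :
  bounded_linear_deriv nX DF -> forall a q x, DF (a *: q, x) = a * DF (q, x).
Proof.
move=> H a q x; have [lin _] := H; have := lin a q 0 x.
by rewrite addr0 (@DF0 _ _ _ H) addr0.
Qed.

Lemma line_deriv (X : Type) (nX : X -> R) F DF (p q : U) (x : X) (s : R) :
  is_frechet_deriv nX F DF ->
  is_derive s 1 (fun t : R => F (p + t *: q) x) (DF (p + s *: q) (q, x)).
Proof.
move=> HF; have [bl Hd] := HF (p + s *: q).
set w := p + s *: q.
set f := fun t : R => F (p + t *: q) x.
suff cv : (fun h : R => h^-1 *: ((f \o shift s) (h *: 1) - f s)) @ 0^' --> DF w (q, x).
  by apply: DeriveDef; [exact: cvgP cv | exact: cvg_lim cv].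
apply/cvgrPdist_le => eps eps0.
set K := `|q| * nX x.
have eps'0 : 0 < eps / (`|K| + 1) by rewrite divr_gt0// ltr_wpDl.
have [del del0 Hdel] := Hd _ eps'0.
have del'0 : 0 < del / (`|q| + 1) by rewrite divr_gt0// ltr_wpDl.
near=> h.
have hn0 : h != 0 by near: h; exact: nbhs_dnbhs_neq.
have hlt : `|h| < del / (`|q| + 1) by near: h; exact: dnbhs0_lt.
have E : (f \o shift s) (h *: 1) = F (w + h *: q) x.
  by rewrite /f /= /w scaler1 scalerDl addrA [X in F X](addrAC p).
rewrite E /f -/w.
have hq : `|h *: q| < del.
  rewrite normrZ; apply: (le_lt_trans _ (_ : `|h| * (`|q| + 1) < del)).
    by rewrite ler_wpM2l// lerDl.
  by rewrite -ltr_pdivlMr ?ltr_wpDl.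
have B := Hdel _ hq x.
have -> : DF w (q, x) - h^-1 *: (F (w + h *: q) x - F w x)
   = - h^-1 * (F (w + h *: q) x - F w x - DF w (h *: q, x)).
  rewrite (@DFZ _ _ _ bl) /= /w.
  set a := F _ x; set b := F _ x; set d := DF _ _.
  have -> : h^-1 *: (a - b) = h^-1 * (a - b) by [].
  rewrite [RHS]mulrBr !mulNr opprK mulrA mulVf // mul1r; ring.
rewrite normrM normrN normrV ?unitfE //.
rewrite ler_pdivrMl ?normr_gt0 //.
apply: (le_trans B).
rewrite /K normrM normr_id.
set c := `|q| * `|nX x|.
have c0 : 0 <= c by rewrite mulr_ge0.
have e0 : 0 <= eps / (c + 1) by rewrite divr_ge0 ?ltW // ltr_wpDl.
apply: (le_trans (y := eps / (c + 1) * `|h| * c)).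
  rewrite normrZ -mulrA -[X in _ <= X]mulrA ler_wpM2l //.
  rewrite -mulrA ler_wpM2l // /c ler_wpM2l // real_ler_norm // num_real //.
rewrite mulrAC [X in _ <= X]mulrC ler_wpM2r // -mulrA ger_pMr //.
by rewrite mulrC ler_pdivrMr ?ltr_wpDl // mul1r lerDl.
Unshelve. all: end_near.
Qed.

Lemma line_cont (X : Type) (nX : X -> R) F (p q : U) (x : X) :
  op_continuous nX F -> continuous (fun t : R => F (p + t *: q) x).
Proof.
move=> HF s; apply/cvgrPdist_le => eps eps0.
have eps'0 : 0 < eps / (`|nX x| + 1) by rewrite divr_gt0// ltr_wpDl.
have [del del0 Hdel] := HF (p + s *: q) _ eps'0.
have del'0 : 0 < del / (`|q| + 1) by rewrite divr_gt0// ltr_wpDl.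
near=> t.
have ht : `|s - t| < del / (`|q| + 1).
  by near: t; apply: cvgr_dist_lt => //; exact: cvg_id.
have E : p + t *: q = p + s *: q + (t - s) *: q.
  by rewrite -addrA -scalerDl; congr (_ + _ *: _); ring.
have hq : `|(t - s) *: q| < del.
  rewrite normrZ distrC; apply: (le_lt_trans _ (_ : `|s - t| * (`|q| + 1) < del)).
    by rewrite ler_wpM2l// lerDl.
  by rewrite -ltr_pdivlMr ?ltr_wpDl.
rewrite E distrC; apply: (le_trans (Hdel _ hq x)).
rewrite mulrAC ler_pdivrMr ?ltr_wpDl // ler_wpM2l ?ltW //.
  by apply: (le_lt_trans (real_ler_norm (num_real _))); rewrite ltrDl.
Unshelve. all: end_near.
Qed.

End Helpers.

Arguments line_deriv {R U X nX F DF}.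
Arguments line_cont {R U X nX F}.

Lemma deriv_rel (R : realType) (U : normedModType R) (X : Type) (nX : X -> R) F DF
  (x1 x2 x3 : X) (a : R) :
  is_frechet_deriv (U := U) nX F DF ->
  (forall w, F w x3 = a * F w x1 + F w x2) ->
  forall w h, DF w (h, x3) = a * DF w (h, x1) + DF w (h, x2).
Proof.
move=> HF Hrel w h.
have d1 := line_deriv w h x1 0 HF.
have d2 := line_deriv w h x2 0 HF.
have d3 := line_deriv w h x3 0 HF.
have E : (fun t : R => F (w + t *: h) x3) =
   a \*: (fun t => F (w + t *: h) x1) + (fun t => F (w + t *: h) x2).
  by apply/funext => t; rewrite Hrel.
rewrite E in d3.
have d := is_deriveD (is_deriveZ a d1) d2.
have := etrans (esym (@derive_val _ _ _ _ _ _ _ d3)) (@derive_val _ _ _ _ _ _ _ d).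
by rewrite scale0r addr0.
Qed.


Section Dhelp.
Variable R : realType.
Implicit Types (f g : R -> R) (x df dg : R).
Lemma dD f g x df dg : is_derive x 1 f df -> is_derive x 1 g dg ->
  is_derive x 1 (fun t => f t + g t) (df + dg).
Proof. by move=> a b; exact: (is_deriveD a b). Qed.
Lemma dB f g x df dg : is_derive x 1 f df -> is_derive x 1 g dg ->
  is_derive x 1 (fun t => f t - g t) (df - dg).
Proof. by move=> a b; exact: (is_deriveB a b). Qed.
Lemma dM f g x df dg : is_derive x 1 f df -> is_derive x 1 g dg ->
  is_derive x 1 (fun t => f t * g t) (f x * dg + g x * df).
Proof. by move=> a b; exact: (is_deriveM a b). Qed.
Lemma dC (c : R) x : is_derive x 1 (fun _ : R => c) 0.
Proof. exact: is_derive_cst. Qed.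
Lemma dI x : is_derive x 1 (fun t : R => t) 1.
Proof. exact: is_derive_id. Qed.
End Dhelp.
Arguments dD {R f g x df dg}. Arguments dB {R f g x df dg}. Arguments dM {R f g x df dg}. Arguments dC {R}. Arguments dI {R}.

Section Chelp.
Variable R : realType.
Implicit Types (f g : R -> R) (x df : R).
Lemma cB f g x : {for x, continuous f} -> {for x, continuous g} ->
  {for x, continuous (fun t => f t - g t)}.
Proof. by move=> a b; exact: (cvgB a b). Qed.
Lemma cM f g x : {for x, continuous f} -> {for x, continuous g} ->
  {for x, continuous (fun t => f t * g t)}.
Proof. by move=> a b; exact: (cvgM a b). Qed.
Lemma cC (c : R) x : {for x, continuous (fun _ : R => c)}.
Proof. exact: cvg_cst. Qed.
Lemma cI x : {for x, continuous (fun t : R => t)}.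
Proof. exact: cvg_id. Qed.
Lemma dcont f x df : is_derive x 1 f df -> {for x, continuous f}.
Proof.
move=> d; apply: differentiable_continuous; apply/derivable1_diffP.
exact: ex_derive.
Qed.
End Chelp.
Arguments cB {R f g x}. Arguments cM {R f g x}. Arguments cC {R}. Arguments cI {R}. Arguments dcont {R f x df}.
Lemma final_ineq (R : realFieldType) (E eta d gamma b0 bh : R) :
  0 < b0 < 1 -> bh < b0 -> 0 <= gamma -> gamma < bh * E ->
  `|d| <= gamma -> E = `|eta + d| ->
  ((1 + bh)^-1 * `|eta| <= E <= (1 - bh)^-1 * `|eta|) /\
  ((1 + b0)^-1 * `|eta| <= E <= (1 - b0)^-1 * `|eta|).
Proof.
move=> /andP[b00 b01] hb g0 gE dg EE.
have E0 : 0 <= E by rewrite EE.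
have bh0 : 0 < bh.
  rewrite ltNge; apply/negP => bh0.
  have : bh * E <= 0 by rewrite mulr_le0_ge0.
  lra.
have t1 : `|eta| <= E + `|d|.
  by have := ler_normB (eta + d) d; rewrite addrK -EE.
have t2 : E <= `|eta| + `|d| by rewrite EE ler_normD.
have u1 : `|eta| <= (1 + bh) * E by nra.
have u2 : (1 - bh) * E <= `|eta| by nra.
have u3 : `|eta| <= (1 + b0) * E by nra.
have u4 : (1 - b0) * E <= `|eta| by nra.
have p1 : 0 < 1 + bh by lra.
have p2 : 0 < 1 - bh by lra.
have p3 : 0 < 1 + b0 by lra.
have p4 : 0 < 1 - b0 by lra.
split; apply/andP; split.
- by rewrite ler_pdivrMl.
- by rewrite ler_pdivlMl.
- by rewrite ler_pdivrMl.
- by rewrite ler_pdivlMl.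
Qed.

Theorem mainTheorem2 (R : realType)
  (U V : completeNormedModType R)
  (A : U -> V -> R) (A1 : U -> U * V -> R) (A2 : U -> U * (U * V) -> R)
  (A3 : U -> U * (U * (U * V)) -> R)
  (J : U -> R) (J1 : U -> U * unit -> R) (J2 : U -> U * (U * unit) -> R)
  (J3 : U -> U * (U * (U * unit)) -> R)
  (HA : C3_operator A A1 A2 A3) (HJ : C3_functional J J1 J2 J3)
  (u : U) (z : V)
  (Hu : forall v : V, A u v = 0)
  (Hz : forall phi : U, A1 u (phi, z) = J1 u (phi, tt))
  (Uh : set U) (Vh : set V)
  (HUh : fin_dim_subspace Uh) (HVh : fin_dim_subspace Vh)
  (uh : U) (zh : V) (Huh_in : Uh uh) (Hzh_in : Vh zh)
  (Huh : forall v : V, Vh v -> A uh v = 0)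
  (Hzh : forall phi : U, Uh phi -> A1 uh (phi, zh) = J1 uh (phi, tt))
  (ut : U) (zt : V) (Hut : Uh ut) (Hzt : Vh zt)
  (b0 bh : R) (Hb0 : 0 < b0 < 1) (Hbh : bh < b0) :
  let R3 := remainder3 J3 A2 A3 ut zt (u - ut) (z - zt) in
  let R3h := remainder3 J3 A2 A3 ut zt (uh - ut) (zh - zt) in
  let eta := 2^-1 * rho A ut (zh - zt) + 2^-1 * rho_star J1 A1 ut zt (uh - ut) in
  let gamma := `|J u - J uh| + `|R3 - R3h| + `|rho A ut zt| + `|R3| in
  gamma < bh * `|J u - J ut| ->
  ((1 + bh)^-1 * `|eta| <= `|J u - J ut| <= (1 - bh)^-1 * `|eta|) /\
  ((1 + b0)^-1 * `|eta| <= `|J u - J ut| <= (1 - b0)^-1 * `|eta|).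
Proof.
move=> R3 R3h eta gamma Hg.
case: HA => Alin HA1 HA2 HA3 HA4.
case: HJ => HJ1 HJ2 HJ3 HJ4.
case: HUh => _ UhC _; case: HVh => _ VhC _.
have He : Uh (uh - ut) by have := UhC (-1) ut uh Hut Huh_in; rewrite scaleN1r addrC.
have He' : Vh (zh - zt) by have := VhC (-1) zt zh Hzt Hzh_in; rewrite scaleN1r addrC.
have L0 : forall w a v v', A w (a *: v + v') = a * A w v + A w v'.
  by move=> w a v v'; case: (Alin w) => l _; exact: l.
have L1 : forall w h a v v', A1 w (h, a *: v + v') = a * A1 w (h, v) + A1 w (h, v').
  by move=> w h a v v'; exact: (@deriv_rel _ _ _ _ _ _ v v' (a *: v + v') a HA1 (fun w => L0 w a v v') w h).
have L2 : forall w k h a v v', A2 w (k, (h, a *: v + v')) =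
    a * A2 w (k, (h, v)) + A2 w (k, (h, v')).
  by move=> w k h a v v'; exact: (@deriv_rel _ _ _ _ _ _ (h, v) (h, v') (h, a *: v + v') a HA2 (fun w => L1 w h a v v') w k).
have L3 : forall w l k h a v v', A3 w (l, (k, (h, a *: v + v'))) =
    a * A3 w (l, (k, (h, v))) + A3 w (l, (k, (h, v'))).
  by move=> w l k h a v v'; exact: (@deriv_rel _ _ _ _ _ _ (k, (h, v)) (k, (h, v')) (k, (h, a *: v + v')) a HA3 (fun w => L2 w k h a v v') w l).
set e := uh - ut in He *.
set e' := zh - zt in He' *.
pose x := fun s : R => ut + s *: e.
pose j0 := fun s => J (x s).
pose j1 := fun s => J1 (x s) (e, tt).
pose j2 := fun s => J2 (x s) (e, (e, tt)).
pose j3 := fun s => J3 (x s) (e, (e, (e, tt))).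
pose a0 := fun s => A (x s) zt.
pose b0' := fun s => A (x s) e'.
pose a1 := fun s => A1 (x s) (e, zt).
pose b1 := fun s => A1 (x s) (e, e').
pose a2 := fun s => A2 (x s) (e, (e, zt)).
pose b2 := fun s => A2 (x s) (e, (e, e')).
pose a3 := fun s => A3 (x s) (e, (e, (e, zt))).
pose b3 := fun s => A3 (x s) (e, (e, (e, e'))).
have dj0 : forall s : R, is_derive s 1 j0 (j1 s) := fun s => line_deriv ut e tt s HJ1.
have dj1 : forall s : R, is_derive s 1 j1 (j2 s) := fun s => line_deriv ut e (e, tt) s HJ2.
have dj2 : forall s : R, is_derive s 1 j2 (j3 s) := fun s => line_deriv ut e (e, (e, tt)) s HJ3.
have da0 : forall s : R, is_derive s 1 a0 (a1 s) := fun s => line_deriv ut e zt s HA1.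
have db0 : forall s : R, is_derive s 1 b0' (b1 s) := fun s => line_deriv ut e e' s HA1.
have da1 : forall s : R, is_derive s 1 a1 (a2 s) := fun s => line_deriv ut e (e, zt) s HA2.
have db1 : forall s : R, is_derive s 1 b1 (b2 s) := fun s => line_deriv ut e (e, e') s HA2.
have da2 : forall s : R, is_derive s 1 a2 (a3 s) := fun s => line_deriv ut e (e, (e, zt)) s HA3.
have db2 : forall s : R, is_derive s 1 b2 (b3 s) := fun s => line_deriv ut e (e, (e, e')) s HA3.
pose f := fun s => j0 s - a0 s - s * b0' s.
pose f1 := fun s => j1 s - a1 s - s * b1 s - b0' s.
pose f2 := fun s => j2 s - a2 s - s * b2 s - 2 * b1 s.
pose f3 := fun s => j3 s - a3 s - s * b3 s - 3 * b2 s.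
have df : forall s : R, is_derive s 1 f (f1 s).
  move=> s; apply: (is_derive_eq (dB (dB (dj0 s) (da0 s)) (dM (dI s) (db0 s)))).
  by rewrite /f1 /=; ring.
have df1 : forall s : R, is_derive s 1 f1 (f2 s).
  move=> s; apply: (is_derive_eq (dB (dB (dB (dj1 s) (da1 s)) (dM (dI s) (db1 s))) (db0 s))).
  by rewrite /f2 /=; ring.
have df2 : forall s : R, is_derive s 1 f2 (f3 s).
  move=> s; apply: (is_derive_eq (dB (dB (dB (dj2 s) (da2 s)) (dM (dI s) (db2 s))) (dM (dC 2 s) (db1 s)))).
  by rewrite /f3 /=; ring.
pose G := fun s => f2 s * (s * (s - 1)) - f1 s * (2 * s - 1) + 2 * f s.
have dG : forall s : R, is_derive s 1 G (f3 s * (s * (s - 1))).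
  move=> s; apply: (is_derive_eq (dD (dB (dM (df2 s) (dM (dI s) (dB (dI s) (dC 1 s))))
     (dM (df1 s) (dB (dM (dC 2 s) (dI s)) (dC 1 s)))) (dM (dC 2 s) (df s)))).
  by rewrite /=; ring.
pose g := fun s : R => (J3 (ut + s *: e) (e, (e, (e, tt)))
      - A3 (ut + s *: e) (e, (e, (e, zt + s *: e')))
      - 3 * A2 (ut + s *: e) (e, (e, e'))) * (s * (s - 1)).
have gE : forall s, g s = f3 s * (s * (s - 1)).
  move=> s; rewrite /g /f3 /j3 /a3 /b3 /b2 /x (addrC zt) L3; ring.
have cf3 : continuous f3.
  move=> s; rewrite /f3. apply: cvgB; [apply: cvgB; [apply: cvgB|]|].
  - exact: (line_cont ut e (e, (e, (e, tt))) HJ4).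
  - exact: (line_cont ut e (e, (e, (e, zt))) HA4).
  - apply: cvgM; [exact: cvg_id | exact: (line_cont ut e (e, (e, (e, e'))) HA4)].
  - apply: cvgM; [exact: cvg_cst | exact: (dcont (db2 s))].
have cg : continuous g.
  have -> : g = (fun s => f3 s * (s * (s - 1))) by apply/funext => s; exact: gE.
  move=> s; apply: cvgM; first exact: cf3.
  by apply: cvgM; [exact: cvg_id | apply: cvgB; [exact: cvg_id | exact: cvg_cst]].
have FTC := @continuous_FTC2 R g G 0 1 ltr01 (continuous_subspaceT cg).
have HR3h : R3h = 2^-1 * (G 1 - G 0).
  rewrite /R3h /remainder3 /Rintegral FTC //=.
  - split.
    + by move=> s _; exact: (@ex_derive _ _ _ _ _ _ _ (dG s)).
    + exact/cvg_at_right_filter/(dcont (dG 0)).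
    + exact/cvg_at_left_filter/(dcont (dG 1)).
  - by move=> s _; rewrite derive1E (@derive_val _ _ _ _ _ _ _ (dG s)) gE.
have x0 : x 0 = ut by rewrite /x scale0r addr0.
have x1 : x 1 = uh by rewrite /x scale1r /e addrC subrK.
have hzh : 1 *: e' + zt = zh by rewrite scale1r /e' subrK.
have ha01 : a0 1 = 0 by rewrite /a0 x1 Huh.
have hb01 : b0' 1 = 0 by rewrite /b0' x1 Huh.
have hj11 : j1 1 = a1 1 + b1 1.
  by rewrite /j1 /a1 /b1 x1 -Hzh // -hzh L1 mul1r addrC.
have hj01 : j0 1 = J uh by rewrite /j0 x1.
have hj00 : j0 0 = J ut by rewrite /j0 x0.
have ha00 : a0 0 = A ut zt by rewrite /a0 x0.
have hb00 : b0' 0 = A ut e' by rewrite /b0' x0.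
have hj10 : j1 0 = J1 ut (e, tt) by rewrite /j1 x0.
have ha10 : a1 0 = A1 ut (e, zt) by rewrite /a1 x0.
have key : J uh - J ut = R3h + rho A ut zt + eta.
  rewrite HR3h /eta /rho /rho_star /G /f /f1 /=.
  rewrite ha01 hb01 hj11 hj01 hj00 ha00 hb00 hj10 ha10 -/e -/e'.
  by field.
have Hf := (@final_ineq R `|J u - J ut| eta (J u - J ut - eta) gamma b0 bh Hb0 Hbh).
apply: Hf.
- by rewrite /gamma !addr_ge0.
- exact: Hg.
- have -> : J u - J ut - eta = (J u - J uh) + R3h + rho A ut zt.
    have kj : J uh = R3h + rho A ut zt + eta + J ut by rewrite -key subrK.
    by rewrite kj; ring.
  have n1 := ler_normD (J u - J uh + R3h) (rho A ut zt).
  have n2 := ler_normD (J u - J uh) R3h.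
  have n3 : `|R3h| <= `|R3 - R3h| + `|R3|.
    by rewrite distrC; have := ler_normD (R3h - R3) R3; rewrite subrK.
  rewrite /gamma; lra.
- by have -> : eta + (J u - J ut - eta) = J u - J ut by ring.
Qed.
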